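(* Let $n>1$, let $D$ be a set, let $f:\mathcal{S}^n\to D$ be a multidimensional rightward function, and let $\odot:D\times D\to D$ be a binary operator. The following are equivalent: (1) $f$ is $\odot$-homomorphic; (2) $f$ is memoryless, witnessed by some rightward or leftward $g:\mathcal{S}^{n-1}\to D$ and some $\oplus:D\times D\to D$ with $f(\sigma\bullet[\delta])=f(\sigma)\oplus g(\delta)$ for all $\sigma\in\mathcal{S}^n,\delta\in\mathcal{S}^{n-1}$, and the summarized version $h:\mathcal{S}_D\to D$ of $f$, defined by $h([])=f([])$ and $h(x\bullet[a])=h(x)\oplus a$ for all $x\in\mathcal{S}_D,a\in D$, is $\odot$-homomorphic.
   Context: $\mathit{Sc}$ is a set of scalars. $\mathcal{S}^0=\mathit{Sc}$ and, for $n\ge1$, $\mathcal{S}^n$ is the set of finite sequences of elements of $\mathcal{S}^{n-1}$; $\mathcal{S}_D$ is the set of finite sequences over $D$; $\bullet$ is concatenation, $[]$ the empty sequence, $[a]$ a one-element sequence. A function $g$ on sequences is rightward if there is an operator $\oplus'$ with $g(x\bullet[a])=g(x)\oplus' a$ for all $x,a$; leftward if there is $\otimes'$ with $g([a]\bullet x)=a\otimes' g(x)$. A function $f:\mathcal{S}^n\to D$ ($n>1$) is multidimensional rightward if there exist a family $\mathbb{G}:D\to(\mathcal{S}^{n-1}\to D)$ of rightward (or leftward) functions and an operator $\otimes:D\times D\to D$ such that $f(\sigma\bullet[\delta])=f(\sigma)\otimes\mathbb{G}(f(\sigma))(\delta)$ for all $\sigma\in\mathcal{S}^n,\delta\in\mathcal{S}^{n-1}$.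 A function $F$ on sequences is $\odot$-homomorphic if $F(x\bullet y)=F(x)\odot F(y)$ for all $x,y$. *)

(* Defs.v *)
From mathcomp Require Import all_boot.
Set Implicit Arguments. Unset Strict Implicit. Unset Printing Implicit Defensive.

Fixpoint Sn (Sc : Type) (n : nat) : Type :=
  match n with 0 => Sc | n'.+1 => seq (Sn Sc n') end.

Definition rightward (A D : Type) (g : seq A -> D) : Prop :=
  exists op : D -> A -> D, forall x a, g (rcons x a) = op (g x) a.

Definition leftward (A D : Type) (g : seq A -> D) : Prop :=
  exists op : A -> D -> D, forall x a, g (a :: x) = op a (g x).

Definition homomorphic (A D : Type) (odot : D -> D -> D) (F : seq A -> D) : Prop :=
  forall x y, F (x ++ y) = odot (F x) (F y).

Definition md_rightward (Sc D : Type) (k : nat) (f : Sn Sc k.+2 -> D) : Prop :=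
  exists (G : D -> Sn Sc k.+1 -> D) (otimes : D -> D -> D),
    ((forall d, rightward (G d)) \/ (forall d, leftward (G d))) /\
    forall (sigma : Sn Sc k.+2) (delta : Sn Sc k.+1),
      f (rcons sigma delta) = otimes (f sigma) (G (f sigma) delta).

Definition memoryless_with (Sc D : Type) (k : nat) (f : Sn Sc k.+2 -> D)
    (g : Sn Sc k.+1 -> D) (oplus : D -> D -> D) : Prop :=
  (rightward g \/ leftward g) /\
  forall (sigma : Sn Sc k.+2) (delta : Sn Sc k.+1),
    f (rcons sigma delta) = oplus (f sigma) (g delta).

Definition summarized (Sc D : Type) (k : nat) (f : Sn Sc k.+2 -> D)
    (oplus : D -> D -> D) : seq D -> D :=
  foldl oplus (f [::]).

Lemma summarized_nil Sc D k (f : Sn Sc k.+2 -> D) oplus :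
  summarized f oplus [::] = f [::].
Proof. by []. Qed.

Lemma summarized_rcons Sc D k (f : Sn Sc k.+2 -> D) oplus x a :
  summarized f oplus (rcons x a) = oplus (summarized f oplus x) a.
Proof. by rewrite /summarized -cats1 foldl_cat. Qed.

(* Main.v *)
Require Import Defs.
From mathcomp Require Import all_boot.
From Stdlib Require Import ClassicalEpsilon.

(* n = k.+2, i.e. ranges over all n > 1; S^(n-1) = Sn Sc k.+1 *)
Theorem theorem4p7 (Sc D : Type) (k : nat)
    (f : Sn Sc k.+2 -> D) (Hf : md_rightward f) (odot : D -> D -> D) :
  homomorphic odot f <->
  exists (g : Sn Sc k.+1 -> D) (oplus : D -> D -> D),
    memoryless_with f g oplus /\ homomorphic odot (summarized f oplus).
Proof.
split.
- move=> Hhom.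
  case: Hf => G [otimes [HG Hrec]].
  pose G0 := G (f [::]).
  pose c : D -> Sn Sc k.+1 :=
    fun d => epsilon (inhabits ([::] : Sn Sc k.+1)) (fun de => G0 de = d).
  have Hc : forall de, G0 (c (G0 de)) = G0 de.
    move=> de; apply: (epsilon_spec (inhabits ([::] : Sn Sc k.+1)) (fun x => G0 x = G0 de)).
    by exists de.
  have Hf1 : forall de, f [:: de] = otimes (f [::]) (G0 de).
    by move=> de; rewrite -[ [:: de] ]/(rcons [::] de) Hrec.
  pose oplus := fun u a => odot u (f [:: c a]).
  have Hh : forall x, summarized f oplus x = f (map c x).
    elim/last_ind => [//|x a IH].
    by rewrite summarized_rcons IH map_rcons -cats1 Hhom.
  exists G0, oplus; split.
  + split; first by case: HG => H; [left|right]; apply: H.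
    move=> sigma delta; rewrite -cats1 Hhom /oplus.
    by rewrite !Hf1 Hc.
  + by move=> x y; rewrite !Hh map_cat Hhom.
- move=> [g [oplus [[_ Hm] Hh]]].
  have E : forall s, f s = summarized f oplus (map g s).
    elim/last_ind => [//|s a IH].
    by rewrite Hm map_rcons summarized_rcons IH.
  by move=> x y; rewrite !E map_cat Hh.
Qed.
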